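(* In the model and for the Algorithm $A$ described in the context, fix $h,\ell$ and a realization of the sample information $\psi$, and let $n_1=h-s_1$, $n_2=\ell-s_2$. Let $I_{\mathrm{order}}$ be the arrival sequence in which the $n_2$ type 2 agents arrive first, followed by the $n_1$ type 1 agents, and let $I$ be any arrival sequence containing $n_2$ type 2 agents and $n_1$ type 1 agents. Then $$\frac{\mathbb E[\mathrm{REW}_A(I_{\mathrm{order}},\psi)]}{\mathrm{OPT}(I_{\mathrm{order}})}\le\frac{\mathbb E[\mathrm{REW}_A(I,\psi)]}{\mathrm{OPT}(I)}.$$
   Context: Model: a decision-maker has $m$ units of a divisible resource; an accepted type-$i$ agent ($i\in\{1,2\}$) yields a reward in $\{0,1\}$ with mean $r_i\in(0,1)$, $r_1>r_2$, unknown. An adversary chooses integers $h,\ell\ge0$; each agent is independently sampled with known probability $p\in(0,1)$; $s_1\sim\mathrm{Bin}(h,p)$, $s_2\sim\mathrm{Bin}(\ell,p)$; sampled agents reveal realized rewards $\rho_{i,j}\sim\mathrm{Ber}(r_i)$; $\psi$ is the sample information. Remaining agents arrive online in order $I$ and are irrevocably accepted (possibly fractionally) or rejected, total allocation at most $m$. $\mathrm{OPT}(I)=r_1\min\{n_1,m\}+r_2\min\{n_2,(m-n_1)^+\}$; $\mathrm{REW}_A(I,\psi)$ is the cumulative expected reward of $A$; $\mathbb E$ is over the algorithm's randomness. Protection level policy for type $i$ with level $x$: accept type $i$ agents while resource remains; accept type $-i$ agents only while fewer than $m-x$ type $-i$ agents have been accepted and resource remains. Algorithm $A$: $\hat r_i=\frac1{s_i}\sum_j\rho_{i,j}$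 if $s_i>0$, else $\hat r_i\sim\mathrm{Uniform}(0,1)$; if $\hat r_1>\hat r_2$ use the protection level policy for type 1 with level $\min\{m,s_1\frac{1-p}{p}\}$, otherwise for type 2 with level $\min\{m,s_2\frac{1-p}{p}\}$. *)

(* Defs.v *)
(* Types: true = type 1 agent, false = type 2 agent. *)
From HB Require Import structures.
From mathcomp Require Import all_boot all_order all_algebra.
Set Implicit Arguments. Unset Strict Implicit. Unset Printing Implicit Defensive.
Import Order.TTheory GRing.Theory Num.Theory.
Local Open Scope ring_scope.

Section Model.
Variable R : realFieldType.

Definition mean_rew (r1 r2 : R) (t : bool) : R := if t then r1 else r2.

(* State of the protection level policy: (remaining resource,
   amount of unprotected-type agents accepted so far, cumulative expected reward). *)
Definition pl_step (r1 r2 m : R) (i : bool) (x : R) (st : R * R * R) (t : bool)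
  : R * R * R :=
  let: (c, a, w) := st in
  let amt := if t == i then Num.min 1 c
             else Num.max 0 (Num.min (Num.min 1 c) ((m - x) - a)) in
  (c - amt, (if t == i then a else a + amt), w + mean_rew r1 r2 t * amt).

Definition pl_reward (r1 r2 m : R) (i : bool) (x : R) (I : seq bool) : R :=
  (foldl (pl_step r1 r2 m i x) (m, 0, 0) I).2.

(* Empirical mean of a sample of realized rewards (only used when nonempty). *)
Definition emp_mean (rho : seq bool) : R := (count id rho)%:R / (size rho)%:R.

(* Probability (over the algorithm's uniform draws used when s_i = 0)
   that  \hat r_1 > \hat r_2. *)
Definition prob_hat1_gt (rho1 rho2 : seq bool) : R :=
  match size rho1, size rho2 with
  | 0%N, 0%N => 1 / 2                      (* P[U1 > U2] *)
  | 0%N, _ => 1 - emp_mean rho2            (* P[U > \hat r_2] *)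
  | _, 0%N => emp_mean rho1                (* P[\hat r_1 > U] *)
  | _, _ => if emp_mean rho2 < emp_mean rho1 then 1 else 0
  end.

Definition prot_level (m p : R) (s : nat) : R := Num.min m (s%:R * (1 - p) / p).

(* E[REW_A(I, psi)] where psi = (rho1, rho2) are the realized sampled rewards,
   s1 = size rho1, s2 = size rho2. *)
Definition exp_rew_A (r1 r2 p : R) (m : nat) (rho1 rho2 : seq bool) (I : seq bool) : R :=
  let q := prob_hat1_gt rho1 rho2 in
  q * pl_reward r1 r2 m%:R true (prot_level m%:R p (size rho1)) I
  + (1 - q) * pl_reward r1 r2 m%:R false (prot_level m%:R p (size rho2)) I.

Definition OPT (r1 r2 : R) (m : nat) (I : seq bool) : R :=
  let n1 := count id I in let n2 := count negb I in
  r1 * (minn n1 m)%:R + r2 * (minn n2 (m - n1))%:R.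

End Model.

Definition I_order (n1 n2 : nat) : seq bool := nseq n2 false ++ nseq n1 true.

(* Main.v *)
Require Import Defs.
From mathcomp Require Import all_boot all_order all_algebra.
From mathcomp Require Import ring lra.
Import Order.TTheory GRing.Theory Num.Theory.
Local Open Scope ring_scope.

Lemma minP3 {R : realFieldType} (a b : R) : Num.min a b <= a /\ Num.min a b <= b /\ (Num.min a b = a \/ Num.min a b = b).
Proof. case: (real_leP (num_real a) (num_real b)) => h; lra. Qed.
Lemma maxP0 {R : realFieldType} (a : R) : 0 <= a -> Num.max 0 a = a.
Proof. by move=> h; case: (real_leP (num_real 0) (num_real a)) => h'; lra. Qed.

Ltac disj := first [lra | left; lra | right; lra | right; left; lra | right; right; lra].

Lemma gen (R : realFieldType) (r1 r2 m x : R) (i : bool) (s : seq bool) :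
  forall c0 a0 w0 : R, 0 <= c0 -> a0 <= m - x ->
  exists ap au,
    foldl (pl_step r1 r2 m i x) (c0, a0, w0) s =
      (c0 - ap - au, a0 + au, w0 + mean_rew r1 r2 i * ap + mean_rew r1 r2 (~~ i) * au)
    /\ (0 <= ap /\ ap <= (count (fun t => t == i) s)%:R)
    /\ (0 <= au /\ au <= (count (fun t => t != i) s)%:R)
    /\ ap + au <= c0 /\ a0 + au <= m - x
    /\ (ap = (count (fun t => t == i) s)%:R \/ ap + au = c0)
    /\ (au = (count (fun t => t != i) s)%:R \/ ap + au = c0 \/ a0 + au = m - x).
Proof.
elim: s => [|t s IH] c0 a0 w0 Hc Ha.
  exists 0, 0; rewrite /= !(subr0, addr0, mulr0); do ! split => //; lra.
rewrite /= !natrD.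
case: (t =P i) => [ti|ne].
  subst t; rewrite /=.
  set amt := Num.min 1 c0.
  have Hamt : 0 <= amt <= c0 /\ amt <= 1 /\ (amt = 1 \/ amt = c0).
    rewrite /amt; have := minP3 1 c0; lra.
  have Hc' : 0 <= c0 - amt by lra.
  have [ap [au [E [[A1 A2] [[B1 B2] [C [D [F G]]]]]]]] := IH _ a0 (w0 + mean_rew r1 r2 i * amt) Hc' Ha.
  exists (amt + ap), au; rewrite E; split.
    congr (_, _, _); ring.
  rewrite /= add0r.
  set P := (count (eq_op^~ i) s)%:R in A2 F *.
  set U := (count (fun t => t != i) s)%:R in B2 G *.
  clear E IH; clearbody P U amt.
  case: Hamt => H1 [H2 H3].
  case: H3 => H3; case: F => F; case: G => [G|[G|G]]; do ! split; disj.
rewrite /=.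
set amt := Num.max 0 (Num.min (Num.min 1 c0) (m - x - a0)).
have Hamt : 0 <= amt <= c0 /\ amt <= m - x - a0 /\ amt <= 1 /\ (amt = 1 \/ amt = c0 \/ amt = m - x - a0).
  have := minP3 1 c0; have := minP3 (Num.min 1 c0) (m - x - a0).
  rewrite /amt maxP0; first lra.
  have := minP3 1 c0; have := minP3 (Num.min 1 c0) (m - x - a0); lra.
have Hc' : 0 <= c0 - amt by lra.
have Ha' : a0 + amt <= m - x by lra.
have [ap [au [E [[A1 A2] [[B1 B2] [C [D [F G]]]]]]]] := IH _ _ (w0 + mean_rew r1 r2 t * amt) Hc' Ha'.
have tE : t = ~~ i by move/eqP: ne; case: (t); case: (i).
exists ap, (amt + au); rewrite E; split.
  congr (_, _, _); rewrite ?tE; ring.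
rewrite /= add0r.
set P := (count (eq_op^~ i) s)%:R in A2 F *.
set U := (count (fun t => t != i) s)%:R in B2 G *.
clear E IH; clearbody P U amt.
case: Hamt => H1 [H2 [H4 H3]].
case: H3 => [H3|[H3|H3]]; case: F => F; case: G => [G|[G|G]]; do ! split; disj.
Qed.

Lemma key {R : realFieldType} (r1 r2 a1 a2 B A m : R) : 0 <= r2 <= r1 -> B <= a1 ->
  (A <= a2 \/ (a1 + a2 = m /\ B + A <= m)) -> r1 * B + r2 * A <= r1 * a1 + r2 * a2.
Proof.
move=> Hr HB [H|[H1 H2]].
  have h1 : 0 <= r1 * (a1 - B) by apply: mulr_ge0; lra.
  have h2 : 0 <= r2 * (a2 - A) by apply: mulr_ge0; lra.
  lra.
have h1 : 0 <= (r1 - r2) * (a1 - B) by apply: mulr_ge0; lra.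
have h2 : 0 <= r2 * (m - B - A) by apply: mulr_ge0; lra.
have -> : a2 = m - a1 by lra.
lra.
Qed.

Lemma cmp {R : realFieldType} (r1 r2 m x : R) (i : bool) (I : seq bool) (n1 n2 : nat) :
  0 <= r2 <= r1 -> 0 <= m -> x <= m -> count id I = n1 -> count negb I = n2 ->
  pl_reward r1 r2 m i x (I_order n1 n2) <= pl_reward r1 r2 m i x I.
Proof.
move=> Hr Hm Hx c1 c2.
have Hx0 : (0:R) <= m - x by lra.
rewrite /pl_reward /I_order foldl_cat.
have [ap [au [E [[A1 A2] [[B1 B2] [C [D [F G]]]]]]]] := gen _ r1 r2 m x i I m 0 0 Hm Hx0.
have [ap1 [au1 [E1 [[A11 A12] [[B11 B12] [C1 [D1 [F1 G1]]]]]]]] :=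
  gen _ r1 r2 m x i (nseq n2 false) m 0 0 Hm Hx0.
rewrite E1.
have Hc2 : 0 <= m - ap1 - au1 by lra.
have [ap2 [au2 [E2 [[A21 A22] [[B21 B22] [C2 [D2 [F2 G2]]]]]]]] :=
  gen _ r1 r2 m x i (nseq n1 true) (m - ap1 - au1) (0 + au1) (0 + mean_rew r1 r2 i * ap1 + mean_rew r1 r2 (~~ i) * au1) Hc2 D1.
rewrite E2 E /=.
rewrite !count_nseq in A12 B12 F1 G1 A22 B22 F2 G2.
have cT : count (fun t => t == true) I = n1 by rewrite -c1; apply: eq_count; case.
have cT' : count (fun t => t != true) I = n2 by rewrite -c2; apply: eq_count; case.
have cF : count (fun t => t == false) I = n2 by rewrite -c2; apply: eq_count; case.
have cF' : count (fun t => t != false) I = n1 by rewrite -c1; apply: eq_count; case.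
clear E E1 E2.
case: i A2 B2 F G A12 B12 F1 G1 A22 B22 F2 G2 => /=;
  rewrite ?cT ?cT' ?cF ?cF' ?mul0n ?mul1n => A2 B2 F G A12 B12 F1 G1 A22 B22 F2 G2.
  have e1 : ap1 = 0 by lra. have e2 : au2 = 0 by lra.
  rewrite e1 e2 !mulr0.
  have HB : ap2 <= ap by case: F => ?; case: G1 => [?|[?|?]]; lra.
  have HD : au1 <= au \/ (ap + au = m /\ ap2 + au1 <= m).
    by case: F => ?; case: G => [?|[?|?]]; first [left; lra | right; split; lra].
  have := key r1 r2 ap au ap2 au1 m Hr HB HD; lra.
have e1 : au1 = 0 by lra. have e2 : ap2 = 0 by lra.
rewrite e1 e2 !mulr0.
have HB : au2 <= au by case: F => ?; case: G => [?|[?|?]]; case: F1 => ?; lra.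
have HD : ap1 <= ap \/ (au + ap = m /\ au2 + ap1 <= m).
  by case: F => ?; first [left; lra | right; split; lra].
have := key r1 r2 au ap au2 ap1 m Hr HB HD; lra.
Qed.

Lemma emp_bd {R : realFieldType} (rho : seq bool) : 0 <= emp_mean R rho <= 1.
Proof.
rewrite /emp_mean; have hc := count_size id rho.
case: (posnP (size rho)) => hs.
  by rewrite hs invr0 mulr0 lexx ler01.
rewrite divr_ge0 ?ler0n //= ler_pdivrMr ?ltr0n // mul1r ler_nat //.
Qed.

Lemma q_bd {R : realFieldType} (rho1 rho2 : seq bool) : 0 <= prob_hat1_gt R rho1 rho2 <= 1.
Proof.
have := @emp_bd R rho1; have := @emp_bd R rho2.
rewrite /prob_hat1_gt; case: (size rho1) => [|a]; case: (size rho2) => [|b] //; try lra.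
case: ifP => _; lra.
Qed.

Theorem lemma1 (R : realFieldType) (m : nat) (p r1 r2 : R) (h l : nat)
    (rho1 rho2 : seq bool) (I : seq bool) :
  0 < p < 1 -> 0 < r1 < 1 -> 0 < r2 < 1 -> r2 < r1 ->
  (size rho1 <= h)%N -> (size rho2 <= l)%N ->
  count id I = (h - size rho1)%N -> count negb I = (l - size rho2)%N ->
  let Io := I_order (h - size rho1) (l - size rho2) in
  exp_rew_A r1 r2 p m rho1 rho2 Io / OPT r1 r2 m Io
    <= exp_rew_A r1 r2 p m rho1 rho2 I / OPT r1 r2 m I.
Proof.
move=> Hp Hr1 Hr2 Hr12 _ _ c1 c2; cbv zeta; set Io := I_order _ _.
have cI1 : count id Io = (h - size rho1)%N.
  by rewrite /Io /I_order count_cat !count_nseq /= mul0n mul1n.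
have cI2 : count negb Io = (l - size rho2)%N.
  by rewrite /Io /I_order count_cat !count_nseq /= mul0n mul1n addn0.
have EO : OPT r1 r2 m Io = OPT r1 r2 m I by rewrite /OPT cI1 cI2 c1 c2.
rewrite EO.
have HO : 0 <= OPT r1 r2 m I.
  rewrite /OPT; apply: addr_ge0; apply: mulr_ge0; rewrite ?ler0n //; lra.
apply: ler_wpM2r; first by rewrite invr_ge0.
have Hr : 0 <= r2 <= r1 by lra.
have Hm : (0:R) <= m%:R by rewrite ler0n.
have Hx : forall s, prot_level m%:R p s <= m%:R by move=> s; rewrite /prot_level; have := minP3 (m%:R : R) (s%:R * (1 - p) / p); lra.
have := q_bd (R:=R) rho1 rho2.
rewrite /exp_rew_A; set q := prob_hat1_gt R rho1 rho2 => Hq.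
have X := cmp r1 r2 m%:R (prot_level m%:R p (size rho1)) true I _ _ Hr Hm (Hx _) c1 c2.
have Y := cmp r1 r2 m%:R (prot_level m%:R p (size rho2)) false I _ _ Hr Hm (Hx _) c1 c2.
apply: lerD; apply: ler_wpM2l => //; lra.
Qed.
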